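(* Let $\Gamma$ be a connected signed graph on $N$ vertices. Then the flexibility $\tau(\Gamma)=N+1-c(\Gamma_+)-c(\Gamma_-)$ equals the dimension of the group of cycles of mixed type, i.e. the dimension of the real linear span of the vectors $v^\gamma=\partial(\gamma)\in\mathbb{R}^N$ as $\gamma$ ranges over the cycles of $\Gamma$ (equivalently, $\tau(\Gamma)=\dim\operatorname{im}(\partial)$).
   Context: A signed graph $\Gamma$ is a finite simple undirected graph with vertex set $\{1,\dots,N\}$ in which every edge carries a nonzero real weight, which may be of either sign. $\Gamma_+$ (resp. $\Gamma_-$) is the spanning subgraph on all vertices containing exactly the positively (resp. negatively) weighted edges; $c(H)$ is the number of connected components of $H$. For an oriented closed cycle $\gamma$ in $\Gamma$ (an element of $H_1(\Gamma)$, extended linearly), define $v^\gamma=\partial(\gamma)\in\mathbb{R}^N$ by: $v^\gamma_i$ increases by one each time $\gamma$ enters vertex $i$ through a negatively weighted edge and exits through a positively weighted edge, decreases by one each time $\gamma$ enters $i$ through a positively weighted edge and exits through a negatively weighted edge, and receives no other contributions (so $v^\gamma_i=0$ at vertices not on $\gamma$ or where $\gamma$ enters and exits through edges of the same sign). Cycles with $v^\gamma\neq 0$ are called cycles of mixed type. *)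

(* Defs.v *)
From HB Require Import structures.
From mathcomp Require Import all_boot all_order all_algebra.
Set Implicit Arguments. Unset Strict Implicit. Unset Printing Implicit Defensive.
Import Order.TTheory GRing.Theory Num.Theory.
Local Open Scope ring_scope.

Definition signed_graph (R : realFieldType) (N : nat)
  (adj : rel 'I_N) (w : 'I_N -> 'I_N -> R) : Prop :=
  [/\ symmetric adj, irreflexive adj,
      (forall i j, w i j = w j i) & (forall i j, adj i j -> w i j != 0)].

Definition pos_rel (R : realFieldType) (N : nat) (adj : rel 'I_N)
  (w : 'I_N -> 'I_N -> R) : rel 'I_N := fun i j => adj i j && (0 < w i j).
Definition neg_rel (R : realFieldType) (N : nat) (adj : rel 'I_N)
  (w : 'I_N -> 'I_N -> R) : rel 'I_N := fun i j => adj i j && (w i j < 0).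

Definition ncomp (N : nat) (e : rel 'I_N) : nat := n_comp e 'I_N.

Definition connected_graph (N : nat) (adj : rel 'I_N) : Prop :=
  forall i j, connect adj i j.

Definition closed_walk (N : nat) (adj : rel 'I_N) (p : seq 'I_N) : Prop :=
  p != [::] /\ cycle adj p.

(* v^gamma: at each visit of vertex j (position i in the cyclic list),
   entering through edge (x_{i-1}, x_i), exiting through (x_i, x_{i+1}):
   +1 if entering negative and exiting positive, -1 if entering positive and
   exiting negative, 0 otherwise. *)
Definition vgam (R : realFieldType) (N : nat) (w : 'I_N -> 'I_N -> R)
  (p : seq 'I_N) : 'rV[R]_N :=
  \row_j \sum_(i < size p | nth j p i == j)
     (let prv := nth j p ((i + size p).-1 %% size p) in
      let nxt := nth j p (i.+1 %% size p) in
      if (w prv j < 0) && (0 < w j nxt) then 1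
      else if (0 < w prv j) && (w j nxt < 0) then -1 else 0).

Definition is_mixed_span (R : realFieldType) (N : nat) (adj : rel 'I_N)
  (w : 'I_N -> 'I_N -> R) (U : {vspace 'rV[R]_N}) : Prop :=
  (forall p, closed_walk adj p -> vgam w p \in U) /\
  (forall W : {vspace 'rV[R]_N},
      (forall p, closed_walk adj p -> vgam w p \in W) -> (U <= W)%VS).

(* Main.v *)
Require Import Defs.
From HB Require Import structures.
From mathcomp Require Import all_boot all_order all_algebra.
From mathcomp Require Import zify.
Set Implicit Arguments. Unset Strict Implicit. Unset Printing Implicit Defensive.
Import Order.TTheory GRing.Theory Num.Theory.
Local Open Scope ring_scope.

Section Dim.
Variables (R : fieldType) (N : nat).
Local Notation dl u := (delta_mx 0 u : 'rV[R]_N).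

Definition gens (e : rel 'I_N) : seq 'rV[R]_N :=
  [seq dl p.1 - dl p.2 | p <- enum [pred p : 'I_N * 'I_N | e p.1 p.2]].
Definition Dsp (e : rel 'I_N) := <<gens e>>%VS.

Lemma memD (e : rel 'I_N) u v : e u v -> dl u - dl v \in Dsp e.
Proof.
by move=> huv; apply: memv_span; apply/mapP; exists (u, v); rewrite ?mem_enum.
Qed.

Lemma D_sub (e : rel 'I_N) (W : {vspace 'rV[R]_N}) :
  (forall u v, e u v -> dl u - dl v \in W) -> (Dsp e <= W)%VS.
Proof.
move=> h; apply/span_subvP => x /mapP [[u v]]; rewrite mem_enum /= => huv ->.
exact: h.
Qed.

Lemma D_connect (e : rel 'I_N) u v : connect e u v -> dl u - dl v \in Dsp e.
Proof.
move=> /connectP [p]; elim: p u => [|z p IH] u /=; first by move=> _ ->; rewrite subrr mem0v.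
move=> /andP [huz hp] hv.
have -> : dl u - dl v = (dl u - dl z) + (dl z - dl v) by rewrite addrA subrK.
by apply: memvD; [apply: memD | apply: IH].
Qed.

Lemma span_coord0 (X : seq 'rV[R]_N) u :
  (forall y, y \in X -> y 0 u = 0) -> forall x, x \in <<X>>%VS -> x 0 u = 0.
Proof.
move=> hX x /(@coord_span _ _ _ (in_tuple X)) ->.
rewrite summxE; apply: big1 => i _; rewrite mxE (hX _ (mem_nth 0 _)) ?mulr0 //.
Qed.

Lemma dimD (e : rel 'I_N) : symmetric e -> (\dim (Dsp e) + n_comp e 'I_N)%N = N.
Proof.
move=> esym; have cs := sym_connect_sym esym.
pose f u := dl u - dl (fingraph.root e u).
pose nr := enum (predC (roots e)).
have eqD : Dsp e = <<map f nr>>%VS.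
  apply/eqP; rewrite eqEsubv; apply/andP; split.
    apply: D_sub => u v huv.
    have fin x : f x \in <<map f nr>>%VS.
      case: (boolP (roots e x)) => hx.
        by rewrite /f (eqP hx) subrr mem0v.
      by apply: memv_span; apply: map_f; rewrite mem_enum.
    have -> : dl u - dl v = f u - f v.
      by rewrite /f (fingraph.rootP cs (connect1 huv)) opprB addrA subrK.
    by rewrite memvB.
  apply/span_subvP => x /mapP [u _ ->]; apply: D_connect; exact: connect_root.
have fr : forall s, uniq s -> all (predC (roots e)) s -> free (map f s).
  elim=> [|u s IH] /=; first by move=> _ _; exact: nil_free.
  move=> /andP [us us'] /andP [ru rs]; rewrite free_cons IH // andbT.
  apply/negP => /span_coord0 h.
  have : f u 0 u = 0.
    apply: h => y /mapP [z zs ->]; rewrite /f !mxE /=.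
    have zu : (u == z) = false by apply/negbTE; apply: contraNneq us => ->.
    have rzu : (u == fingraph.root e z) = false.
      apply/negbTE; apply: contraNneq ru => ->; exact: roots_root.
    by rewrite zu rzu subrr.
  rewrite /f !mxE /=.
  have -> : (u == fingraph.root e u) = false by apply/negbTE; rewrite eq_sym.
  by rewrite eqxx subr0 => /eqP; rewrite oner_eq0.
have := fr nr (enum_uniq _); rewrite /free -eqD => /(_ _)/eqP ->.
  rewrite size_map -cardE /n_comp_mem addnC.
  rewrite -[X in (_ = X)%N]card_ord -(cardC (roots e)); congr (_ + _)%N.
  by apply: eq_card => x; rewrite !inE andbT.
by apply/allP => x; rewrite mem_enum.
Qed.
End Dim.

Section Phi.
Variables (R : realFieldType) (N : nat) (w : 'I_N -> 'I_N -> R).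
Local Notation dl u := (delta_mx 0 u : 'rV[R]_N).

Fixpoint phig (g : R -> R) (x : 'I_N) (t : seq 'I_N) : 'rV[R]_N :=
  if t is y :: t' then g (w x y) *: (dl x - dl y) + phig g y t' else 0.

Lemma phig_cat g x s1 s2 : phig g x (s1 ++ s2) = phig g x s1 + phig g (last x s1) s2.
Proof. by elim: s1 x => [|y s1 IH] x /=; rewrite ?add0r // IH addrA. Qed.

Lemma phig_idx g x t : phig g x t =
  \sum_(k < size t) g (w (nth x (x :: t) k) (nth x t k)) *:
      (dl (nth x (x :: t) k) - dl (nth x t k)).
Proof.
elim: t x => [|y t IH] x /=; first by rewrite big_ord0.
rewrite big_ord_recl /= IH; congr (_ + _); apply: eq_bigr => k _.
have h1 : nth x t k = nth y t k := set_nth_default _ _ (ltn_ord k).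
have h2 : nth x (y :: t) k = nth y (y :: t) k by apply: set_nth_default; rewrite /= ltnS ltnW.
by rewrite add0n h1 h2.
Qed.

Definition gp (r : R) : R := if 0 < r then 1 else 0.
Definition gn (r : R) : R := if r < 0 then 1 else 0.

Lemma fgp (u v : R) : u != 0 -> v != 0 ->
  (if (u < 0) && (0 < v) then 1 else if (0 < u) && (v < 0) then -1 else 0)
    = gp v - gp u.
Proof.
rewrite /gp => hu hv.
case: (ltrgt0P u) hu => // hu _; case: (ltrgt0P v) hv => // hv _;
  rewrite ?subrr ?subr0 ?sub0r //.
Qed.

Lemma phig_tele (adj : rel 'I_N) x t :
  (forall i j, adj i j -> w i j != 0) -> path adj x t ->
  phig gp x t + phig gn x t = dl x - dl (last x t).
Proof.
move=> hw; elim: t x => [|y t IH] x /=; first by rewrite addr0 subrr.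
move=> /andP [hxy hp]; rewrite addrACA -scalerDl IH //.
have -> : gp (w x y) + gn (w x y) = 1.
  rewrite /gp /gn; have := hw _ _ hxy.
  by case: (ltrgt0P (w x y)) => // h _; rewrite ?addr0 ?add0r.
by rewrite scale1r addrA subrK.
Qed.

End Phi.

Section V.
Variables (R : realFieldType) (N : nat) (w : 'I_N -> 'I_N -> R).
Local Notation dl u := (delta_mx 0 u : 'rV[R]_N).

Lemma vgam_phi (adj : rel 'I_N) x s :
  (forall i j, adj i j -> w i j != 0) -> path adj x (rcons s x) ->
  vgam w (x :: s) = phig w (gp (R:=R)) x (rcons s x).
Proof.
move=> hw hp.
set p := x :: s.
pose n := size p.
pose a (k : 'I_n) := nth x p k.
have ha : forall (k : 'I_n), nth x (x :: rcons s x) k = a k.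
  by move=> k; rewrite -rcons_cons nth_rcons ltn_ord.
have hb : forall (k : 'I_n), nth x (rcons s x) k = a (ordS k).
  move=> k; rewrite nth_rcons /a /=.
  have kn := ltn_ord k; rewrite /n /= ltnS leq_eqVlt in kn.
  case/orP: kn => [/eqP ek | kl].
    by rewrite ek ltnn eqxx modnn.
  by rewrite kl modn_small.
have hadj : forall k : 'I_n, adj (a k) (a (ordS k)).
  move=> k; rewrite -ha -hb; move/pathP: hp => /(_ x k); apply.
  by rewrite size_rcons (ltn_ord k).
have hd : forall (k : 'I_n) y, nth y p k = a k.
  by move=> k y; apply: set_nth_default.
apply/rowP => j; rewrite mxE phig_idx size_rcons summxE.
rewrite big_mkcond /=.
transitivity (\sum_(i < n) ((a i == j)%:R * gp (w (a i) (a (ordS i)))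
   - (a (ordS i) == j)%:R * gp (w (a i) (a (ordS i))))).
  rewrite sumrB.
  rewrite [X in _ = _ - X](reindex_inj (@ord_pred_inj n)) /=.
  rewrite -sumrB; apply: eq_bigr => i _.
  rewrite ord_predK.
  have -> : nth j p ((i + size p).-1 %% size p) = a (ord_pred i) by apply: hd (ord_pred i) j.
  have -> : nth j p (i.+1 %% size p) = a (ordS i) by apply: hd (ordS i) j.
  rewrite hd; case: eqP => [<- | _]; last by rewrite !mul0r subrr.
  rewrite !mul1r fgp.
  - by [].
  - by apply: hw; have := hadj (ord_pred i); rewrite ord_predK.
  - by apply: hw; apply: hadj.
apply: eq_bigr => i _; rewrite ha hb !mxE /= mulrBr.
by rewrite !(eq_sym j) mulrC [X in _ - X]mulrC.
Qed.
End V.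

Section Main.
Variables (R : realFieldType) (N : nat) (adj : rel 'I_N) (w : 'I_N -> 'I_N -> R).
Local Notation dl u := (delta_mx 0 u : 'rV[R]_N).
Hypothesis hw : forall i j, adj i j -> w i j != 0.

Lemma phig_D (g : R -> R) (e : rel 'I_N) x t :
  (forall u v, adj u v -> g (w u v) = 0 \/ (g (w u v) = 1 /\ e u v)) ->
  path adj x t -> phig w g x t \in Dsp R e.
Proof.
move=> hg; elim: t x => [|y t IH] x /=; first by rewrite mem0v.
move=> /andP [hxy hp]; apply: memvD; last exact: IH.
case: (hg _ _ hxy) => [-> | [-> he]]; first by rewrite scale0r mem0v.
by rewrite scale1r; apply: memD.
Qed.

Lemma mul_D (e : rel 'I_N) (A : 'M[R]_N) (W : {vspace 'rV[R]_N}) :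
  (forall u v, e u v -> (dl u - dl v) *m A \in W) ->
  forall y, y \in Dsp R e -> y *m A \in W.
Proof.
move=> h y /(@coord_span _ _ _ (in_tuple (gens R e))) ->.
rewrite mulmx_suml; apply: rpred_sum => i _; rewrite -scalemxAl; apply: rpredZ.
have : (gens R e)`_i \in gens R e by apply: mem_nth; rewrite (ltn_ord i).
by move=> /mapP [[u v]]; rewrite mem_enum /= => huv ->; apply: h.
Qed.

End Main.

Theorem mainTheorem7 (R : realFieldType) (N : nat) (adj : rel 'I_N)
  (w : 'I_N -> 'I_N -> R) :
  (0 < N)%N -> signed_graph adj w -> connected_graph adj ->
  exists U : {vspace 'rV[R]_N},
    is_mixed_span adj w U /\
    (N%:Z + 1 - (ncomp (pos_rel adj w))%:Z - (ncomp (neg_rel adj w))%:Z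
       = (\dim U)%:Z)%R.
Proof.
move=> hN [asym airr wsym wnz] hconn.
have hw : forall i j, adj i j -> w i j != 0 by [].
set pos := pos_rel adj w; set neg := neg_rel adj w.
have psym : symmetric pos by move=> i j; rewrite /pos /pos_rel asym wsym.
have nsym : symmetric neg by move=> i j; rewrite /neg /neg_rel asym wsym.
pose dl u := (delta_mx 0 u : 'rV[R]_N).
exists (Dsp R pos :&: Dsp R neg)%VS; split; first split.
-
  move=> [|x s] [//= _ hc]; rewrite /cycle in hc.
  rewrite (vgam_phi hw hc) memv_cap; apply/andP; split.
    apply: (phig_D _ hc) => u v huv; rewrite /gp; case: ifP => h; [right | left] => //.
    by split => //; rewrite /pos /pos_rel huv h.
  have := phig_tele hw hc; rewrite last_rcons subrr => /eqP; rewrite addr_eq0 => /eqP ->.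
  rewrite rpredN; apply: (phig_D _ hc) => u v huv; rewrite /gn; case: ifP => h; [right | left] => //.
  by split => //; rewrite /neg /neg_rel huv h.
-
  move=> W hW.
  pose o : 'I_N := Ordinal hN.
  have exs : forall u, exists s, path adj o s && (last o s == u).
    by move=> u; have /connectP [s hs ->] := hconn o u; exists s; rewrite hs eqxx.
  have ext : forall u, exists t, path adj u t && (last u t == o).
    by move=> u; have /connectP [t ht ->] := hconn u o; exists t; rewrite ht eqxx.
  pose sp u := xchoose (exs u); pose tp u := xchoose (ext u).
  have hsp u : path adj o (sp u) /\ last o (sp u) = u.
    by have /andP [? /eqP ?] := xchooseP (exs u).
  have htp u : path adj u (tp u) /\ last u (tp u) = o.
    by have /andP [? /eqP ?] := xchooseP (ext u).
  pose Psi u := phig w (gp (R:=R)) o (sp u).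
  pose The u := phig w (gp (R:=R)) u (tp u).
  have closedW : forall L, path adj o L -> last o L = o -> phig w (gp (R:=R)) o L \in W.
    move=> L; case/lastP: L => [|s z]; first by rewrite mem0v.
    rewrite last_rcons => hp hz; subst z.
    rewrite -(vgam_phi hw hp); apply: hW; split => //.
  have F1 u : Psi u + The u \in W.
    have [h1 h2] := hsp u; have [h3 h4] := htp u.
    have := closedW (sp u ++ tp u); rewrite phig_cat h2.
    by apply; rewrite ?cat_path ?last_cat h2 ?h1 ?h3.
  have F2 u v : adj u v -> Psi u + gp (w u v) *: (dl u - dl v) + The v \in W.
    move=> huv; have [h1 h2] := hsp u; have [h3 h4] := htp v.
    have := closedW (sp u ++ v :: tp v); rewrite phig_cat h2 /= addrA.
    by apply; rewrite ?cat_path ?last_cat h2 ?h1 /= ?huv ?h3 ?h4.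
  have F3 u v : adj u v -> Psi u - Psi v + gp (w u v) *: (dl u - dl v) \in W.
    move=> huv; have := memvB (F2 u v huv) (F1 v).
    by rewrite opprD addrACA subrr addr0 addrAC.
  pose M := \matrix_u Psi u.
  have hM u : dl u *m M = Psi u by rewrite -rowE rowK.
  apply/subvP => y; rewrite memv_cap => /andP [yp yn].
  have -> : y = y *m (M + 1%:M) - y *m M by rewrite mulmxDr mulmx1 addrAC subrr add0r.
  apply: memvB.
    apply: (mul_D (e := pos)) yp => u v /andP [huv h].
    rewrite mulmxDr mulmx1 mulmxBl !hM.
    by have := F3 u v huv; rewrite /gp h scale1r.
  apply: (mul_D (e := neg)) yn => u v /andP [huv h].
  rewrite mulmxBl !hM.
  have := F3 u v huv; rewrite /gp.
  by rewrite (_ : 0 < w u v = false) ?scale0r ?addr0 // ltNge ltW.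
-
  have dP := dimD R psym; have dN := dimD R nsym.
  have asum : (Dsp R pos + Dsp R neg)%VS = Dsp R adj.
    apply/eqP; rewrite eqEsubv subv_add -andbA; apply/and3P; split.
    + by apply: D_sub => u v /andP [h _]; apply: memD.
    + by apply: D_sub => u v /andP [h _]; apply: memD.
    apply: D_sub => u v huv.
    have := hw _ _ huv; case: (ltrgt0P (w u v)) => // h _;
      first [ by apply: (subvP (addvSr _ _)); apply: memD; rewrite /neg /neg_rel huv h
            | by apply: (subvP (addvSl _ _)); apply: memD; rewrite /pos /pos_rel huv h ].
  have dA := dimD R asym.
  have c1 : n_comp adj 'I_N = 1%N.
    rewrite -(n_comp_connect (sym_connect_sym asym) (Ordinal hN)).
    by apply: eq_n_comp_r => x; rewrite !inE hconn.
  have := dimv_sum_cap (Dsp R pos) (Dsp R neg); rewrite asum.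
  rewrite /ncomp; move: dP dN dA c1.
  match goal with |- _ -> _ -> _ -> _ -> _ -> _ = Posz ?X =>
    have Hd : X = \dim (Dsp R pos :&: Dsp R neg)%VS by []; move: Hd; generalize X end.
  generalize (\dim (Dsp R pos)) (\dim (Dsp R neg)) (\dim (Dsp R adj)) (\dim (Dsp R pos :&: Dsp R neg))%VS (n_comp pos 'I_N) (n_comp neg 'I_N) (n_comp adj 'I_N).
  move=> x a b c d e f g; lia.
Qed.
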